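(* Consider, for $\varepsilon>0$ and $|\sigma|\le\sigma_0\varepsilon$, the real analytic system $$\dot x=x(\sigma-az)+\tfrac{y}{\varepsilon}+\varepsilon\tilde f,\qquad \dot y=-\tfrac{x}{\varepsilon}+y(\sigma-az)+\varepsilon\tilde g,\qquad \dot z=-1+b(x^2+y^2)+z^2+\varepsilon\tilde h,$$ with the properties listed in the context. Take $\nu_1>0$ and the ellipsoid $S_{\nu_1}=\{z^2+\frac{b}{a+1}(x^2+y^2)=1-\nu_1\}$. Then there exists $\varepsilon_0>0$ such that for every $\varepsilon\in(0,\varepsilon_0)$ and $|\sigma|\le\sigma_0\varepsilon$, the surface $S_{\nu_1}\cap\{-1\le z\le-\varepsilon|\log\varepsilon|\}$ is contained in the region $D$ and the flow of the system points outwards on it.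
   Context: Here $a>0$, $b>0$, $\sigma_0>0$ constants; $\tilde f,\tilde g,\tilde h$ are real analytic functions of $(x,y,z,\varepsilon,\sigma)$ with $\tilde f,\tilde g=\mathcal{O}(\|(x,y)\|)$ and $\tilde h=(z+1)\tilde h_1+\tilde h_2$, $\tilde h_1$ bounded, $\tilde h_2=\mathcal{O}(\|(x,y,z+1)\|^2)$. $p_-=(0,0,-1)$ is a saddle-focus equilibrium whose two-dimensional unstable manifold satisfies $W^u(p_-)\cap\{z\le0\}=\{\frac{b}{a+1}(x^2+y^2)+z^2=1+\varepsilon(1-z^2)\psi(z,\theta)\}$ with $\psi$ analytic, $2\pi$-periodic in the polar angle $\theta$, and $|\psi|,|\partial_z\psi|\le M$, $|\partial_\theta\psi|\le\varepsilon M$ for $z\le0$. $D$ is the closed region contained in $\{z\le0\}$ with boundary $\{z=0\}\cup W^u(p_-)$. *)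

(* Defs.v *)
From Stdlib Require Import Reals Lra.
From Coquelicot Require Import Coquelicot.
Open Scope R_scope.

(* Type of the perturbation terms: functions of (x, y, z, eps, sigma). *)
Definition pert := R -> R -> R -> R -> R -> R.

Definition admissible (sigma0 eps1 e s : R) : Prop :=
  0 < e < eps1 /\ Rabs s <= sigma0 * e.

Definition bigO_xy (sigma0 eps1 : R) (f : pert) : Prop :=
  forall rho, 0 < rho -> exists C, forall x y z e s,
    admissible sigma0 eps1 e s ->
    Rabs x <= rho -> Rabs y <= rho -> Rabs z <= rho ->
    Rabs (f x y z e s) <= C * sqrt (x ^ 2 + y ^ 2).

Definition bounded_pert (sigma0 eps1 : R) (f : pert) : Prop :=
  forall rho, 0 < rho -> exists C, forall x y z e s,
    admissible sigma0 eps1 e s ->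
    Rabs x <= rho -> Rabs y <= rho -> Rabs z <= rho ->
    Rabs (f x y z e s) <= C.

Definition bigO2_xyz1 (sigma0 eps1 : R) (f : pert) : Prop :=
  forall rho, 0 < rho -> exists C, forall x y z e s,
    admissible sigma0 eps1 e s ->
    Rabs x <= rho -> Rabs y <= rho -> Rabs z <= rho ->
    Rabs (f x y z e s) <= C * (x ^ 2 + y ^ 2 + (z + 1) ^ 2).

Definition psi_props (sigma0 eps1 M : R) (psi : R -> R -> R -> R -> R) : Prop :=
  forall e s z th, admissible sigma0 eps1 e s ->
    psi e s z (th + 2 * PI) = psi e s z th /\
    (z <= 0 ->
      Rabs (psi e s z th) <= M /\
      ex_derive (fun z' => psi e s z' th) z /\
      Rabs (Derive (fun z' => psi e s z' th) z) <= M /\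
      ex_derive (fun t => psi e s z t) th /\
      Rabs (Derive (fun t => psi e s z t) th) <= e * M).

Definition Xfield (a b e s : R) (ft gt ht : pert) (x y z : R) : R * R * R :=
  (x * (s - a * z) + y / e + e * ft x y z e s,
   - x / e + y * (s - a * z) + e * gt x y z e s,
   -1 + b * (x ^ 2 + y ^ 2) + z ^ 2 + e * ht x y z e s).

Definition Fell (a b x y z : R) : R := z ^ 2 + b / (a + 1) * (x ^ 2 + y ^ 2).

Definition on_S (a b nu1 x y z : R) : Prop := Fell a b x y z = 1 - nu1.

(* The flow points outwards on S_nu1 at (x,y,z): grad F . X > 0. *)
Definition points_outward (a b e s : R) (ft gt ht : pert) (x y z : R) : Prop :=
  let '(X1, X2, X3) := Xfield a b e s ft gt ht x y z in
  2 * b / (a + 1) * x * X1 + 2 * b / (a + 1) * y * X2 + 2 * z * X3 > 0.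

(* The region D: points with z <= 0 lying on the inner side of
   W^u(p_-) = {b/(a+1)(x^2+y^2) + z^2 = 1 + eps (1-z^2) psi(z,theta)},
   theta the polar angle of (x,y) (every angle is allowed when x=y=0). *)
Definition inD (a b : R) (psi : R -> R -> R -> R -> R) (e s x y z : R) : Prop :=
  z <= 0 /\
  forall th, x = sqrt (x ^ 2 + y ^ 2) * cos th ->
             y = sqrt (x ^ 2 + y ^ 2) * sin th ->
    b / (a + 1) * (x ^ 2 + y ^ 2) + z ^ 2 <= 1 + e * (1 - z ^ 2) * psi e s z th.

(* Main.v *)
Require Import Defs.
From Stdlib Require Import Reals Lra Psatz.
From Coquelicot Require Import Coquelicot.
Open Scope R_scope.

Lemma pert_bound (x y F C : R) :
  Rabs F <= C * sqrt (x ^ 2 + y ^ 2) ->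
  Rabs (x * F) <= Rabs C * (x ^ 2 + y ^ 2).
Proof.
  intros H.
  assert (Hr : 0 <= x ^ 2 + y ^ 2) by nra.
  pose proof (sqrt_pos (x ^ 2 + y ^ 2)) as Hq.
  pose proof (sqrt_sqrt (x ^ 2 + y ^ 2) Hr) as Hqq.
  set (q := sqrt (x ^ 2 + y ^ 2)) in *.
  assert (Hx : Rabs x <= q).
  { pose proof (pow2_abs x). pose proof (Rabs_pos x). nra. }
  rewrite Rabs_mult.
  pose proof (Rabs_pos F). pose proof (Rabs_pos x).
  assert (C * q <= Rabs C * q) by (pose proof (Rle_abs C); nra).
  assert (Rabs x * Rabs F <= q * Rabs F) by (apply Rmult_le_compat_r; lra).
  assert (q * Rabs F <= q * (Rabs C * q)) by (apply Rmult_le_compat_l; lra).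
  rewrite <- Hqq. nra.
Qed.

Theorem lemma3p5 (a b sigma0 nu1 eps1 M : R) (ft gt ht h1 h2 : pert)
  (psi : R -> R -> R -> R -> R) :
  0 < a -> 0 < b -> 0 < sigma0 -> 0 < nu1 -> 0 < eps1 ->
  bigO_xy sigma0 eps1 ft ->
  bigO_xy sigma0 eps1 gt ->
  (forall x y z e s, ht x y z e s = (z + 1) * h1 x y z e s + h2 x y z e s) ->
  bounded_pert sigma0 eps1 h1 ->
  bigO2_xyz1 sigma0 eps1 h2 ->
  psi_props sigma0 eps1 M psi ->
  exists eps0, 0 < eps0 /\
    forall e s, 0 < e < eps0 -> Rabs s <= sigma0 * e ->
      forall x y z, on_S a b nu1 x y z -> -1 <= z <= - e * Rabs (ln e) ->
        inD a b psi e s x y z /\ points_outward a b e s ft gt ht x y z.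
Proof.
  intros Ha Hb Hs0 Hnu He1 Hf Hg Hht Hh1 Hh2 Hpsi.
  set (c := b / (a + 1)).
  assert (Hc : 0 < c) by (unfold c; apply Rdiv_lt_0_compat; lra).
  assert (Hbc : b = c * (a + 1)) by (unfold c; field; lra).
  set (rho := 1 + 1 / c).
  assert (Hrho : 0 < rho) by (unfold rho; pose proof (Rinv_0_lt_compat c Hc); unfold Rdiv; lra).
  destruct (Hf rho Hrho) as [Cf HCf].
  destruct (Hg rho Hrho) as [Cg HCg].
  destruct (Hh1 rho Hrho) as [C1 HC1].
  destruct (Hh2 rho Hrho) as [C2 HC2].
  set (A := 2 * sigma0 + 2 * (Rabs Cf + Rabs Cg) + 2 * Rabs C1
            + 2 * Rabs C2 * (1 / c + 1)).
  exists (Rmin (Rmin eps1 1) (Rmin (nu1 / (Rabs M + 1)) (exp (- A / (2 * nu1))))).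
  split.
  { assert (0 < nu1 / (Rabs M + 1)) by (apply Rdiv_lt_0_compat; pose proof (Rabs_pos M); lra).
    pose proof (exp_pos (- A / (2 * nu1))).
    repeat apply Rmin_glb_lt; lra. }
  intros e s [He0 He] Hs x y z HS Hz.
  assert (He_1 : e < eps1) by (eapply Rlt_le_trans; [exact He|]; eapply Rle_trans; [apply Rmin_l|apply Rmin_l]).
  assert (He_2 : e < 1) by (eapply Rlt_le_trans; [exact He|]; eapply Rle_trans; [apply Rmin_l|apply Rmin_r]).
  assert (He_3 : e < nu1 / (Rabs M + 1)) by (eapply Rlt_le_trans; [exact He|]; eapply Rle_trans; [apply Rmin_r|apply Rmin_l]).
  assert (He_4 : e < exp (- A / (2 * nu1))) by (eapply Rlt_le_trans; [exact He|]; eapply Rle_trans; [apply Rmin_r|apply Rmin_r]).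
  assert (Hadm : admissible sigma0 eps1 e s) by (split; [lra|exact Hs]).
  assert (Hln : ln e < - A / (2 * nu1)).
  { rewrite <- (ln_exp (- A / (2 * nu1))). apply ln_increasing; lra. }
  assert (Hln0 : ln e < 0).
  { rewrite <- ln_1. apply ln_increasing; lra. }
  rewrite Rabs_left in Hz by exact Hln0.
  unfold on_S, Fell in HS. fold c in HS.
  set (r2 := x ^ 2 + y ^ 2) in *.
  assert (Hr2 : 0 <= r2) by (unfold r2; nra).
  assert (Hzneg : z < 0) by nra.
  assert (Hcr : c * r2 <= 1) by nra.
  assert (Hr2c : r2 <= 1 / c).
  { apply (Rmult_le_reg_l c); [exact Hc|]. field_simplify; lra. }
  assert (Hx : Rabs x <= rho).
  { unfold rho. assert (x ^ 2 <= r2) by (unfold r2; nra).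
    destruct (Rle_dec (Rabs x) 1). lra. pose proof (pow2_abs x). nra. }
  assert (Hy : Rabs y <= rho).
  { unfold rho. assert (y ^ 2 <= r2) by (unfold r2; nra).
    destruct (Rle_dec (Rabs y) 1). lra. pose proof (pow2_abs y). nra. }
  assert (Hzr : Rabs z <= rho).
  { unfold rho. rewrite Rabs_left by lra.
    pose proof (Rinv_0_lt_compat c Hc). unfold Rdiv. lra. }
  split.
  - unfold inD. fold c r2. split; [lra|]. intros th _ _.
    destruct (Hpsi e s z th Hadm) as [_ Hp]. destruct (Hp ltac:(lra)) as [Hpb _].
    pose proof (Rabs_pos (psi e s z th)) as Hpp.
    assert (HM : 0 <= M) by lra.
    assert (-M <= psi e s z th) by (pose proof (proj1 (Rabs_le_between _ _) Hpb) as HH; lra).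
    assert (Hz2 : 0 <= 1 - z ^ 2 <= 1) by nra.
    assert (HeM : e * (Rabs M + 1) < nu1).
    { apply (Rmult_lt_compat_r (Rabs M + 1)) in He_3; [|pose proof (Rabs_pos M); lra].
      unfold Rdiv in He_3. rewrite Rmult_assoc, Rinv_l in He_3; [lra|pose proof (Rabs_pos M); lra]. }
    rewrite Rabs_right in HeM by lra.
    assert (Hez : 0 <= e * (1 - z ^ 2)) by (apply Rmult_le_pos; lra).
    assert (0 <= e * (1 - z ^ 2) * (psi e s z th + M)) by (apply Rmult_le_pos; lra).
    assert (e * (1 - z ^ 2) * M <= e * M) by (apply Rmult_le_compat_r; [lra|]; nra).
    assert (e * (1 - z ^ 2) * psi e s z th >= - (e * M)) by nra.
    lra.
  - unfold points_outward, Xfield. cbv beta iota.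
    fold c.
    pose proof (HCf x y z e s Hadm Hx Hy Hzr) as Bf.
    pose proof (HCg x y z e s Hadm Hx Hy Hzr) as Bg.
    pose proof (HC1 x y z e s Hadm Hx Hy Hzr) as B1.
    pose proof (HC2 x y z e s Hadm Hx Hy Hzr) as B2.
    pose proof (Hht x y z e s) as Eh.
    set (F := ft x y z e s) in *. set (G := gt x y z e s) in *.
    set (H1 := h1 x y z e s) in *. set (H2 := h2 x y z e s) in *.
    set (HH := ht x y z e s) in *.
    fold r2 in Bf, Bg.
    apply pert_bound in Bf. fold r2 in Bf.
    assert (Bg' : Rabs G <= Cg * sqrt (y ^ 2 + x ^ 2)) by (replace (y ^ 2 + x ^ 2) with r2 by (unfold r2; ring); exact Bg).
    apply pert_bound in Bg'. replace (y ^ 2 + x ^ 2) with r2 in Bg' by (unfold r2; ring).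
    assert (Hid : 2 * b / (a + 1) * x * (x * (s - a * z) + y / e + e * F) +
      2 * b / (a + 1) * y * (- x / e + y * (s - a * z) + e * G) +
      2 * z * (-1 + b * r2 + z ^ 2 + e * HH)
      = 2 * c * r2 * s - 2 * nu1 * z + 2 * c * e * (x * F + y * G) + 2 * z * e * HH).
    { assert (2 * b / (a + 1) = 2 * c) by (unfold c; field; lra).
      rewrite H. rewrite Hbc.
      match goal with |- ?L = ?R => assert (Hd : L - R = 2 * z * (z ^ 2 + c * r2 - (1 - nu1))) end.
      { unfold r2. field. lra. }
      rewrite HS in Hd. lra. }
    change (x ^ 2 + y ^ 2) with r2. rewrite Hid.
    assert (T1 : Rabs (2 * c * r2 * s) <= 2 * sigma0 * e).
    { rewrite !Rabs_mult. rewrite (Rabs_right 2) by lra. rewrite (Rabs_right c) by lra.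
      rewrite (Rabs_right r2) by lra. pose proof (Rabs_pos s). nra. }
    assert (T2 : Rabs (2 * c * e * (x * F + y * G)) <= 2 * e * (Rabs Cf + Rabs Cg)).
    { rewrite !Rabs_mult. rewrite (Rabs_right 2) by lra. rewrite (Rabs_right c) by lra.
      rewrite (Rabs_right e) by lra.
      pose proof (Rabs_triang (x * F) (y * G)).
      pose proof (Rabs_pos Cf). pose proof (Rabs_pos Cg).
      assert (Rabs (x * F + y * G) <= (Rabs Cf + Rabs Cg) * r2) by lra.
      assert (c * Rabs (x * F + y * G) <= (Rabs Cf + Rabs Cg)) by nra.
      nra. }
    assert (THH : Rabs HH <= Rabs C1 + Rabs C2 * (1 / c + 1)).
    { rewrite Eh. pose proof (Rabs_triang ((z + 1) * H1) H2) as H.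
      rewrite Rabs_mult in H. rewrite (Rabs_right (z+1)) in H by lra.
      pose proof (Rle_abs C1). pose proof (Rabs_pos H1). pose proof (Rabs_pos C2).
      assert ((z + 1) * Rabs H1 <= Rabs C1) by nra.
      assert (C2 * (r2 + (z + 1) ^ 2) <= Rabs C2 * (1 / c + 1)).
      { pose proof (Rle_abs C2).
        assert (0 <= r2 + (z + 1) ^ 2 <= 1 / c + 1) by nra. nra. }
      change (x ^ 2 + y ^ 2) with r2 in B2. lra. }
    assert (T3 : Rabs (2 * z * e * HH) <= 2 * e * (Rabs C1 + Rabs C2 * (1 / c + 1))).
    { rewrite !Rabs_mult. rewrite (Rabs_right 2) by lra. rewrite (Rabs_left z) by lra.
      rewrite (Rabs_right e) by lra. pose proof (Rabs_pos HH).
      assert (- z * Rabs HH <= Rabs HH) by nra.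
      assert (2 * e * (- z * Rabs HH) <= 2 * e * (Rabs C1 + Rabs C2 * (1 / c + 1))) by
        (apply Rmult_le_compat_l; lra).
      nra. }
    assert (Hsum : 2 * c * r2 * s + 2 * c * e * (x * F + y * G) + 2 * z * e * HH >= - (e * A)).
    { unfold A.
      pose proof (proj1 (Rabs_le_between _ _) T1). 
      pose proof (proj1 (Rabs_le_between _ _) T2). pose proof (proj1 (Rabs_le_between _ _) T3).
      lra. }
    assert (HA : A < 2 * nu1 * (- ln e)).
    { apply (Rmult_lt_compat_r (2 * nu1)) in Hln; [|lra].
      unfold Rdiv in Hln. rewrite Rmult_assoc, Rinv_l in Hln; lra. }
    assert (Hz' : - z * (2 * nu1) >= e * (- ln e) * (2 * nu1)) by nra.
    nra.
Qed.
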